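(* The following three conditions are equivalent: (i) $\lim_{|x|\to\infty}\int_{x-a}^{x+a}q(t)\,dt=\infty$ for every $a\in(0,\infty)$; (ii) $\lim_{|x|\to\infty}d_1(x)=0$; (iii) $\lim_{|x|\to\infty}d_2(x)=0$.
   Context: Let $q:\mathbb R\to\mathbb R$ be measurable with $q\in L_1^{\mathrm{loc}}(\mathbb R)$ and $q(x)\ge1$ a.e. For each $x\in\mathbb R$, $d_1(x)$, $d_2(x)$ are the unique positive solutions $d$ of, respectively, $$1=\int_0^{\sqrt2 d}\int_{x-t}^{x}q(\xi)\,d\xi\,dt,\qquad 1=\int_0^{\sqrt2 d}\int_{x}^{x+t}q(\xi)\,d\xi\,dt.$$ *)

(* Defs.v *)
From HB Require Import structures.
From mathcomp Require Import all_boot all_order all_algebra.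
From mathcomp Require Import all_classical all_reals all_analysis.
Set Implicit Arguments. Unset Strict Implicit. Unset Printing Implicit Defensive.
Import Order.TTheory GRing.Theory Num.Theory.
Import numFieldNormedType.Exports.
Local Open Scope classical_set_scope.
Local Open Scope ring_scope.
Local Open Scope ereal_scope.

Definition Ileft (R : realType) (q : R -> R) (x t : R) : \bar R :=
  \int[@lebesgue_measure R]_(xi in `[(x - t)%R, x]) (q xi)%:E.
Definition Iright (R : realType) (q : R -> R) (x t : R) : \bar R :=
  \int[@lebesgue_measure R]_(xi in `[x, (x + t)%R]) (q xi)%:E.

Definition F1 (R : realType) (q : R -> R) (x d : R) : \bar R :=
  \int[@lebesgue_measure R]_(t in `[0%R, (Num.sqrt 2 * d)%R]) Ileft q x t.
Definition F2 (R : realType) (q : R -> R) (x d : R) : \bar R :=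
  \int[@lebesgue_measure R]_(t in `[0%R, (Num.sqrt 2 * d)%R]) Iright q x t.

Definition is_d1 (R : realType) (q : R -> R) (x d : R) : Prop :=
  (0 < d)%R /\ F1 q x d = 1.
Definition is_d2 (R : realType) (q : R -> R) (x d : R) : Prop :=
  (0 < d)%R /\ F2 q x d = 1.

Definition window_int (R : realType) (q : R -> R) (a x : R) : \bar R :=
  \int[@lebesgue_measure R]_(t in `[(x - a)%R, (x + a)%R]) (q t)%:E.

(* Main.v *)
Require Import Defs.
From HB Require Import structures.
From mathcomp Require Import all_boot all_order all_algebra.
From mathcomp Require Import all_classical all_reals all_analysis.
From mathcomp Require Import measurable_realfun lra.
Import Order.TTheory GRing.Theory Num.Theory.
Import numFieldNormedType.Exports.
Local Open Scope classical_set_scope.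
Local Open Scope ring_scope.
Section Abs.
Context (R : realType).
Local Notation mu := (@lebesgue_measure R).
Variables (W : R -> R -> \bar R) (G : R -> R -> \bar R) (sg : R).
Hypothesis Gm : forall x, measurable_fun setT (G x).
Hypothesis G0 : forall x t, (0 <= G x t)%E.
Hypothesis Gnd : forall x t t', t <= t' -> (G x t <= G x t')%E.
Hypothesis GW : forall x t a, 0 <= t -> t <= a -> (G x t <= W a x)%E.
Hypothesis WG : forall x c, 0 < c -> (W (c/2) (x + sg * (c/2)) <= G x c)%E.

Lemma upperG (x s : R) : 0 <= s ->
  (\int[mu]_(t in `[0%R, s]) G x t <= G x s * s%:E)%E.
Proof.
move=> s0.
have H : (\int[mu]_(t in `[0%R, s]) G x t <= \int[mu]_(t in `[0%R, s]) (cst (G x s)) t)%E.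
  apply: ge0_le_integral => //.
  - exact: measurable_funS (Gm x).
  - by move=> t; rewrite /= in_itv /= => /andP[_ ts]; exact: Gnd.
apply: (le_trans H).
rewrite integral_cst //= lebesgue_measure_itv /= lte_fin.
case: ifPn => hs; first by rewrite oppr0 adde0.
have -> : s = 0 by move: hs; rewrite -leNgt => hs; lra.
exact: le_refl.
Qed.

Lemma lowerG (x del s : R) : 0 < del -> del <= s ->
  (G x (del/2) * (del/2)%:E <= \int[mu]_(t in `[0%R, s]) G x t)%E.
Proof.
move=> d0 ds.
have H1 : (\int[mu]_(t in `[(del/2)%R, del]) (cst (G x (del/2))) t = G x (del/2) * (del/2)%:E)%E.
  rewrite integral_cst //= lebesgue_measure_itv /= lte_fin.
  have -> : del / 2 < del by lra.
  by rewrite -EFinD; have -> : del - del/2 = del/2 by lra.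
have H2 : (\int[mu]_(t in `[(del/2)%R, del]) (cst (G x (del/2))) t <= \int[mu]_(t in `[(del/2)%R, del]) G x t)%E.
  apply: ge0_le_integral => //.
  - by move=> t _; exact: G0.
  - exact: measurable_funS (Gm x).
  - by move=> t; rewrite /= in_itv /= => /andP[ts _]; exact: Gnd.
have H3 : (\int[mu]_(t in `[(del/2)%R, del]) G x t <= \int[mu]_(t in `[0%R, s]) G x t)%E.
  apply: ge0_subset_integral => //.
  - exact: measurable_funS (Gm x).
  - move=> t; rewrite /= !in_itv /= => /andP[h1 h2]; apply/andP; split; lra.
by rewrite -H1; apply: (le_trans H2).
Qed.


Variable F : set_system R.
Hypothesis FF : Filter F.
Hypothesis Fsh : forall (b : R) (P : R -> Prop),
  (\forall y \near F, P y) -> \forall x \near F, P (x + b).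
Variable d : R -> R.
Hypothesis dpos : forall x, 0 < d x.
Hypothesis dF : forall x,
  (\int[mu]_(t in `[0%R, (Num.sqrt 2 * d x)%R]) G x t = 1)%E.

Lemma dirA : (forall a, 0 < a -> W a x @[x --> F] --> +oo%E) ->
  d x @[x --> F] --> 0.
Proof.
move=> hW; apply/cvgrPdist_lt => e e0.
have s2 : 0 < Num.sqrt 2 :> R by rewrite sqrtr_gt0.
set del := Num.sqrt 2 * e.
have del0 : 0 < del by rewrite mulr_gt0.
set c := del / 2.
have c0 : 0 < c by rewrite /c; lra.
have c20 : 0 < c / 2 by lra.
have /cvgeyPge/(_ (2 / c)) H := hW (c/2) c20.
have := @Fsh (sg * (c/2)) _ H.
apply: filterS => x Hx.
rewrite sub0r normrN ger0_norm ?(ltW (dpos x)) //.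
rewrite ltNge; apply/negP => edx.
have L := @lowerG x del (Num.sqrt 2 * d x) del0 (ler_wpM2l (ltW s2) edx).
rewrite dF in L.
have L2 : ((2/c)%:E * c%:E <= G x c * c%:E)%E.
  apply: lee_wpmul2r; first by rewrite lee_fin ltW.
  apply: (le_trans Hx); exact: WG.
have := le_trans L2 L.
rewrite -EFinM lee_fin divfK ?gt_eqF //.
lra.
Qed.

Lemma dirB : d x @[x --> F] --> 0 ->
  forall a, 0 < a -> W a x @[x --> F] --> +oo%E.
Proof.
move=> hd a a0; apply/cvgeyPge => A.
set B := Num.max A 1.
have B0 : 0 < B by rewrite lt_max ltr01 orbT.
have AB : A <= B by rewrite le_max lexx.
have s2 : 0 < Num.sqrt 2 :> R by rewrite sqrtr_gt0.
set m := Num.min a (1/B).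
have m0 : 0 < m by rewrite lt_min a0 divr_gt0.
move/cvgrPdist_lt: hd => /(_ (m / Num.sqrt 2) (divr_gt0 m0 s2)).
apply: filterS => x.
rewrite sub0r normrN ger0_norm ?(ltW (dpos x)) // => hx.
set s := Num.sqrt 2 * d x.
have s0 : 0 < s by rewrite mulr_gt0.
have sm : s < m by rewrite /s mulrC -ltr_pdivlMr.
have sa : s <= a by apply: ltW; apply: (lt_le_trans sm); rewrite ge_min lexx.
have sB : s < 1 / B by apply: (lt_le_trans sm); rewrite ge_min lexx orbT.
have U := @upperG x s (ltW s0); rewrite dF in U.
have U2 : (G x s * s%:E <= W a x * s%:E)%E.
  apply: lee_wpmul2r; first by rewrite lee_fin ltW.
  exact: GW x s a (ltW s0) sa.
have W0 : (0 <= W a x)%E by apply: (le_trans (G0 x s)); exact: GW x s a (ltW s0) sa.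
move: (le_trans U U2) W0; case: (W a x) => [w| |] //.
- rewrite -EFinM !lee_fin => h1 h0.
  have sB' : s * B < 1 by rewrite -ltr_pdivlMr.
  nra.
- by move=> _ _; rewrite leey.
Qed.

Lemma dir_iff : (forall a, 0 < a -> W a x @[x --> F] --> +oo%E) <->
  d x @[x --> F] --> 0.
Proof. by split; [exact: dirA | exact: dirB]. Qed.

End Abs.

Section Conc.
Context (R : realType) (q : R -> R)
  (hqm : measurable_fun [set: R] q)
  (hqloc : locally_integrable [set: R] q)
  (hq1 : {ae @lebesgue_measure R, forall x, 1 <= q x}).
Local Notation mu := (@lebesgue_measure R).

Let qq := fun x => Num.max (q x) 1.

Let qqm : measurable_fun setT qq.
Proof. exact: (measurable_maxr hqm (measurable_cst (1:R))). Qed.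

Let qq1 x : 1 <= qq x.
Proof. by rewrite /qq /= le_max lexx orbT. Qed.

Let eqI (a b : R) : (\int[mu]_(t in `[a, b]) (q t)%:E = \int[mu]_(t in `[a, b]) (qq t)%:E)%E.
Proof.
apply: ae_eq_integral => //.
- apply/measurable_EFinP; exact: measurable_funS hqm.
- apply/measurable_EFinP; exact: measurable_funS qqm.
- move: hq1; apply: filterS; first exact: (ae_filter_ringOfSetsType mu).
  by move=> x hx _ /=; rewrite /qq /= max_l.
Qed.

Let P0 (a b : R) : (0 <= \int[mu]_(t in `[a, b]) (qq t)%:E)%E.
Proof. apply: integral_ge0 => t _; rewrite lee_fin; exact: le_trans ler01 (qq1 t). Qed.

Let Pfin (a b : R) : (\int[mu]_(t in `[a, b]) (qq t)%:E < +oo)%E.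
Proof.
rewrite -eqI.
case: hqloc => _ _ /(_ `[a, b]%classic (subsetT _) (@segment_compact _ a b)) h.
have h' : (\int[mu]_(x in `[a, b]) `|(q x)%:E| < +oo)%E.
  by under eq_integral do rewrite abse_EFin.
rewrite integral_fin_num_abs // in h'; last exact: measurable_funS hqm.
by move/fin_numPlt: h' => /andP[].
Qed.

Let Pmono (a b c e : R) : c <= a -> b <= e ->
  (\int[mu]_(t in `[a, b]) (qq t)%:E <= \int[mu]_(t in `[c, e]) (qq t)%:E)%E.
Proof.
move=> ca be; apply: ge0_subset_integral => //.
- apply/measurable_EFinP; exact: measurable_funS qqm.
- by move=> t _; rewrite lee_fin; exact: le_trans ler01 (qq1 t).
- move=> t; rewrite /= !in_itv /= => /andP[h1 h2]; apply/andP; split; lra.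
Qed.


Let GmL x : measurable_fun setT (Ileft q x).
Proof.
have -> : Ileft q x = EFin \o (fun t => fine (\int[mu]_(u in `[(x - t)%R, x]) (qq u)%:E)).
  apply/funext => t; rewrite /Ileft eqI /= fineK // ge0_fin_numE ?P0 //; exact: Pfin.
apply/measurable_EFinP; apply: nondecreasing_measurable => // t t' tt'.
apply: fine_le; rewrite ?ge0_fin_numE ?P0 ?Pfin //.
apply: Pmono => //; lra.
Qed.

Let GmR x : measurable_fun setT (Iright q x).
Proof.
have -> : Iright q x = EFin \o (fun t => fine (\int[mu]_(u in `[x, (x + t)%R]) (qq u)%:E)).
  apply/funext => t; rewrite /Iright eqI /= fineK // ge0_fin_numE ?P0 //; exact: Pfin.
apply/measurable_EFinP; apply: nondecreasing_measurable => // t t' tt'.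
apply: fine_le; rewrite ?ge0_fin_numE ?P0 ?Pfin //.
apply: Pmono => //; lra.
Qed.

Let G0L x t : (0 <= Ileft q x t)%E. Proof. rewrite /Ileft eqI; exact: P0. Qed.
Let G0R x t : (0 <= Iright q x t)%E. Proof. rewrite /Iright eqI; exact: P0. Qed.
Let GndL x t t' : t <= t' -> (Ileft q x t <= Ileft q x t')%E.
Proof. move=> h; rewrite /Ileft !eqI; apply: Pmono => //; lra. Qed.
Let GndR x t t' : t <= t' -> (Iright q x t <= Iright q x t')%E.
Proof. move=> h; rewrite /Iright !eqI; apply: Pmono => //; lra. Qed.
Let GWL x t a : 0 <= t -> t <= a -> (Ileft q x t <= window_int q a x)%E.
Proof. move=> h1 h2; rewrite /Ileft /window_int !eqI; apply: Pmono; lra. Qed.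
Let GWR x t a : 0 <= t -> t <= a -> (Iright q x t <= window_int q a x)%E.
Proof. move=> h1 h2; rewrite /Iright /window_int !eqI; apply: Pmono; lra. Qed.
Let WGL x c : 0 < c -> (window_int q (c/2) (x + (-1) * (c/2)) <= Ileft q x c)%E.
Proof.
move=> c0; rewrite /Ileft /window_int.
have -> : x + -1 * (c/2) - c/2 = x - c by lra.
have -> : x + -1 * (c/2) + c/2 = x by lra.
exact: le_refl.
Qed.
Let WGR x c : 0 < c -> (window_int q (c/2) (x + 1 * (c/2)) <= Iright q x c)%E.
Proof.
move=> c0; rewrite /Iright /window_int.
have -> : x + 1 * (c/2) - c/2 = x by lra.
have -> : x + 1 * (c/2) + c/2 = x + c by lra.
exact: le_refl.
Qed.

Let FshP (b : R) (P : R -> Prop) :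
  (\forall y \near +oo, P y) -> \forall x \near +oo, P (x + b).
Proof. move=> HP; exact: (cvg_addrr b) HP. Qed.
Let FshM (b : R) (P : R -> Prop) :
  (\forall y \near -oo, P y) -> \forall x \near -oo, P (x + b).
Proof. move=> HP; exact: (cvg_addrr_Ny b) HP. Qed.

Lemma iffLp (d : R -> R) : (forall x, is_d1 q x (d x)) ->
  (forall a, 0 < a -> window_int q a x @[x --> +oo] --> +oo%E) <-> d x @[x --> +oo] --> 0.
Proof.
move=> hd.
apply: (@dir_iff R (window_int q) (Ileft q) (-1) GmL G0L GndL GWL WGL _ _ FshP d (fun x => (hd x).1) (fun x => (hd x).2)).
Qed.
Lemma iffLm (d : R -> R) : (forall x, is_d1 q x (d x)) ->
  (forall a, 0 < a -> window_int q a x @[x --> -oo] --> +oo%E) <-> d x @[x --> -oo] --> 0.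
Proof.
move=> hd.
apply: (@dir_iff R (window_int q) (Ileft q) (-1) GmL G0L GndL GWL WGL _ _ FshM d (fun x => (hd x).1) (fun x => (hd x).2)).
Qed.
Lemma iffRp (d : R -> R) : (forall x, is_d2 q x (d x)) ->
  (forall a, 0 < a -> window_int q a x @[x --> +oo] --> +oo%E) <-> d x @[x --> +oo] --> 0.
Proof.
move=> hd.
apply: (@dir_iff R (window_int q) (Iright q) 1 GmR G0R GndR GWR WGR _ _ FshP d (fun x => (hd x).1) (fun x => (hd x).2)).
Qed.
Lemma iffRm (d : R -> R) : (forall x, is_d2 q x (d x)) ->
  (forall a, 0 < a -> window_int q a x @[x --> -oo] --> +oo%E) <-> d x @[x --> -oo] --> 0.
Proof.
move=> hd.
apply: (@dir_iff R (window_int q) (Iright q) 1 GmR G0R GndR GWR WGR _ _ FshM d (fun x => (hd x).1) (fun x => (hd x).2)).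
Qed.

End Conc.

Theorem lemma4p1 (R : realType) (q : R -> R) (d1 d2 : R -> R)
  (hqm : measurable_fun [set: R] q)
  (hqloc : locally_integrable [set: R] q)
  (hq1 : {ae @lebesgue_measure R, forall x, 1 <= q x})
  (hd1 : forall x, is_d1 q x (d1 x))
  (hd2 : forall x, is_d2 q x (d2 x)) :
  let cond_i := forall a : R, 0 < a ->
      (window_int q a x
         @[x --> +oo] --> +oo%E) /\
      (window_int q a x
         @[x --> -oo] --> +oo%E) in
  let cond_ii := (d1 x @[x --> +oo] --> 0) /\ (d1 x @[x --> -oo] --> 0) in
  let cond_iii := (d2 x @[x --> +oo] --> 0) /\ (d2 x @[x --> -oo] --> 0) in
  (cond_i <-> cond_ii) /\ (cond_ii <-> cond_iii).
Proof.
move=> cond_i cond_ii cond_iii.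
have LP := @iffLp R q hqm hqloc hq1 d1 hd1.
have LM := @iffLm R q hqm hqloc hq1 d1 hd1.
have RP := @iffRp R q hqm hqloc hq1 d2 hd2.
have RM := @iffRm R q hqm hqloc hq1 d2 hd2.
split; split.
- move=> hi; split; [apply/LP | apply/LM] => a a0;
    [exact: (hi a a0).1 | exact: (hi a a0).2].
- by move=> [h1 h2] a a0; split; [exact: (LP.2 h1) | exact: (LM.2 h2)].
- by move=> [h1 h2]; split; [apply/RP/LP | apply/RM/LM].
- by move=> [h1 h2]; split; [apply/LP/RP | apply/LM/RM].
Qed.
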